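(* Let $\mathcal X\subseteq[0,1]$ be a Borel set with $0,1\in\mathcal X$, fix $\mu\in(0,1)$ and let $I_\mu=[(\mu-1)^{-1},\mu^{-1}]$. Let $E=(E_t)_{t\ge0}$ be an e-process for $\bar{\mathcal H}^\infty_\mu$. For $x\in\mathcal X$ let $E^x=(E^x_t)_{t\ge0}$ be the sequence of Borel functions $E^x_t:\mathcal X^t\to[0,+\infty)$ given by $E^x_t(y^t)=E_{t+1}(x,y^t)$ for $t\ge1$ and $E^x_0=E_1(x)$. Then there is $\lambda_1\in I_\mu$ such that for any $\tau\in\mathcal T$, any $Q\in\bar{\mathcal H}^\infty_\mu$ and any $x\in\mathcal X$, $$\mathbb E_Q[E^x_\tau]\le 1+\lambda_1(x-\mu).$$
   Context: $\mathcal X^\infty$ is the space of sequences in $\mathcal X$ with the product sigma-field generated by cylinder sets; $\mathcal F_t$ is generated by the first $t$ coordinates. $\mathcal T$ is the set of finite stopping times: measurable $\tau:\mathcal X^\infty\to\{0,1,2,\dots\}$ with $\{\tau=t\}\in\mathcal F_t$ for all $t\ge0$; for a sequence $g=(g_s)_{s\ge0}$, $g_\tau(y^\infty)=g_{\tau(y^\infty)}(y^{\tau(y^\infty)})$. $\bar{\mathcal H}^\infty_\mu$ is the set of probability measures $Q$ on $\mathcal X^\infty$ such that, for $X^\infty\sim Q$, the law of $X_1$ has mean $\mu$ and support of at most two points, and for every $t\ge2$ the conditional law of $X_t$ given $X^{t-1}$ has mean $\mu$ and is supported on at most two points, $Q$-almost surely. An e-process for $\bar{\mathcal H}^\infty_\mu$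 is a sequence $E=(E_t)_{t\ge0}$ of non-negative Borel functions $E_t:\mathcal X^t\to[0,+\infty)$ ($E_0$ a constant) with $\mathbb E_Q[E_\tau]\le1$ for all $Q\in\bar{\mathcal H}^\infty_\mu$ and all $\tau\in\mathcal T$. *)

(* Defs.v *)
From HB Require Import structures.
From mathcomp Require Import all_boot all_order all_algebra.
From mathcomp Require Import all_classical all_reals all_analysis.
Set Implicit Arguments. Unset Strict Implicit. Unset Printing Implicit Defensive.
Import Order.TTheory GRing.Theory Num.Theory.
Import numFieldNormedType.Exports.
Local Open Scope classical_set_scope.
Local Open Scope ring_scope.

Section defs.
Variable R : realType.

(* Sequences y = (y_0, y_1, ...) ; coordinate i (0-based) is the paper's X_{i+1}. *)
Definition cyl_sets : set (set (nat -> R)) :=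
  [set A | exists i (B : set R), measurable B /\ A = (fun w => w i) @^-1` B].

Definition Seq := g_sigma_algebraType cyl_sets.

Definition Ft (t : nat) : set (set (nat -> R)) :=
  <<s [set A | exists i (B : set R),
         (i < t)%N /\ measurable B /\ A = (fun w => w i) @^-1` B] >>.

Definition Xinf (X : set R) : set (nat -> R) := [set w | forall n, X (w n)].

Definition Ft_measurable (X : set R) (t : nat) (f : (nat -> R) -> R) : Prop :=
  forall B : set R, measurable B ->
    exists A, Ft t A /\ f @^-1` B `&` Xinf X = A `&` Xinf X.

Definition is_stopping_time (X : set R) (tau : (nat -> R) -> nat) : Prop :=
  forall t, exists A, Ft t A /\ tau @^-1` [set t] `&` Xinf X = A `&` Xinf X.

Definition two_point_mean (mu : R) (m : probability R R) : Prop :=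
  (exists a b : R, m [set a; b] = 1%E) /\ (\int[m]_x (x%:E) = mu%:E)%E.

(* the conditional law of coordinate n given the first n coordinates (a regular
   conditional distribution: an F_n-measurable kernel kappa) has, Q-a.s.,
   mean mu and support of at most two points.  For n = 0 (F_0 trivial) this
   is a statement about the law of the first coordinate. *)
Definition cond_two_point (mu : R) (Q : probability Seq R) (n : nat) : Prop :=
  exists kappa : (nat -> R) -> probability R R,
    (forall B : set R, measurable B ->
       forall C : set R, measurable C ->
         Ft n ((fun w => fine (kappa w B)) @^-1` C)) /\
    (forall (A : set (nat -> R)) (B : set R), Ft n A -> measurable B ->
       Q (A `&` (fun w => w n) @^-1` B) = (\int[Q]_(w in A) kappa w B)%E) /\
    {ae Q, forall w, two_point_mean mu (kappa w)}.

(* bar H^infty_mu : laws on X^infty (i.e. concentrated on X^infty) with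
   two-point mean-mu conditional laws *)
Definition barH (X : set R) (mu : R) (Q : probability Seq R) : Prop :=
  Q (Xinf X) = 1%E /\ forall n, cond_two_point mu Q n.

Definition eprocess (X : set R) (mu : R) (E : nat -> (nat -> R) -> R) : Prop :=
  (forall t, Ft_measurable X t (E t)) /\
  (forall t w, Xinf X w -> 0 <= E t w) /\
  (forall (Q : probability Seq R) (tau : (nat -> R) -> nat),
     barH X mu Q -> is_stopping_time X tau ->
     (\int[Q]_(w in Xinf X) (E (tau w) w)%:E <= 1)%E).

Definition scons (x : R) (w : nat -> R) : nat -> R :=
  fun n => if n is k.+1 then w k else x.

End defs.

(* Main.v *)
Require Import Defs.
From HB Require Import structures.
From mathcomp Require Import all_boot all_order all_algebra.
From mathcomp Require Import all_classical all_reals all_analysis.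
From mathcomp Require Import measurable_realfun.
From mathcomp Require Import ring lra.
Import Order.TTheory GRing.Theory Num.Theory.
Import numFieldNormedType.Exports.
Local Open Scope classical_set_scope.
Local Open Scope ring_scope.
Set Implicit Arguments. Unset Strict Implicit. Unset Printing Implicit Defensive.
Section Aux.
Variable R : realType.
Implicit Types (w : nat -> R).
Local Notation FT := (@Ft R).

Definition shift (w : nat -> R) : nat -> R := fun n => w n.+1.

Lemma pre_sigma (f : (nat->R) -> (nat->R)) (G1 G2 : set (set (nat -> R))) :
  (forall A, G1 A -> <<s G2>> (f @^-1` A)) -> forall A, <<s G1>> A -> <<s G2>> (f @^-1` A).
Proof.
move=> h A hA.
have H : <<s G1>> `<=` image_set_system setT f <<s G2>>.
  apply: smallest_sub.
  - exact/sigma_algebra_image/smallest_sigma_algebra.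
  - by move=> B /h; rewrite /image_set_system /= setTI.
by have := H A hA; rewrite /image_set_system /= setTI.
Qed.

Lemma Ft_sigma t : sigma_algebra setT (FT t).
Proof. exact: smallest_sigma_algebra. Qed.

Lemma Ft_gen t i B : (i < t)%N -> measurable B -> FT t ((fun w : nat -> R => w i) @^-1` B).
Proof. by move=> it mB; apply: sub_sigma_algebra; exists i, B. Qed.

Lemma Ft0 t : FT t (set0 : set (nat -> R)).
Proof. by case: (Ft_sigma t). Qed.

Lemma FtC t A : FT t A -> FT t (~` A).
Proof. by case: (Ft_sigma t) => _ h _ /h; rewrite setTD. Qed.

Lemma FtT t : FT t (setT : set (nat -> R)).
Proof. by rewrite -setC0; apply: FtC; exact: Ft0. Qed.

Lemma FtU t (F : (set (nat -> R))^nat) : (forall n, FT t (F n)) -> FT t (\bigcup_n F n).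
Proof. by case: (Ft_sigma t) => _ _; apply. Qed.

Lemma FtU2 t A B : FT t A -> FT t B -> FT t (A `|` B).
Proof.
move=> hA hB; rewrite -bigcup2E; apply: FtU => n.
by case: n => [|[|n]] //=; exact: Ft0.
Qed.

Lemma FtI2 t A B : FT t A -> FT t B -> FT t (A `&` B).
Proof.
move=> hA hB; rewrite -[A `&` B]setCK setCI; apply: FtC; apply: FtU2; exact: FtC.
Qed.

Lemma Ft_mono s t : (s <= t)%N -> forall A, FT s A -> FT t A.
Proof.
move=> st A; apply: smallest_sub; first exact: Ft_sigma.
move=> _ [i [B [it [mB ->]]]]; apply: Ft_gen => //; exact: leq_trans st.
Qed.

Lemma Ft_meas t A : FT t A -> @measurable _ (Seq R) A.
Proof.
apply: smallest_sub; first exact: smallest_sigma_algebra.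
move=> _ [i [B [it [mB ->]]]]; apply: sub_sigma_algebra; by exists i, B.
Qed.

Lemma Ft_shift t A : FT t A -> FT t.+1 (shift @^-1` A).
Proof.
apply: pre_sigma => _ [i [B [it [mB ->]]]].
by apply: (@Ft_gen t.+1 i.+1 B).
Qed.

Lemma Ft_scons x t A : FT t.+1 A -> FT t (scons x @^-1` A).
Proof.
apply: pre_sigma => _ [i [B [it [mB ->]]]].
case: i it => [|i] it /=.
  have [xB|xB] := pselect (B x).
    by rewrite (_ : _ @^-1` _ = setT); [exact: FtT| apply/seteqP; split].
  by rewrite (_ : _ @^-1` _ = set0); [exact: Ft0| apply/seteqP; split].
by apply: Ft_gen.
Qed.

Lemma meas_shift : measurable_fun [set: Seq R] (shift : Seq R -> Seq R).
Proof.
apply: (@measurability _ _ (Seq R) (Seq R) setT _ (@cyl_sets R)) => //.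
move=> _ [_ [i [B [mB ->]]] <-]; rewrite setTI.
apply: sub_sigma_algebra; by exists i.+1, B.
Qed.

Lemma meas_scons x : measurable_fun [set: Seq R] (scons x : Seq R -> Seq R).
Proof.
apply: (@measurability _ _ (Seq R) (Seq R) setT _ (@cyl_sets R)) => //.
move=> _ [_ [i [B [mB ->]]] <-]; rewrite setTI.
case: i => [|i] /=.
  have [xB|xB] := pselect (B x).
    by rewrite (_ : _ @^-1` _ = setT); [exact: measurableT| apply/seteqP; split].
  by rewrite (_ : _ @^-1` _ = set0); [exact: measurable0| apply/seteqP; split].
apply: sub_sigma_algebra; by exists i, B.
Qed.

Lemma meas_Xinf X : measurable X -> @measurable _ (Seq R) (Xinf X).
Proof.
move=> mX; rewrite (_ : Xinf X = \bigcap_n ((fun w : nat -> R => w n) @^-1` X)).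
  apply: bigcapT_measurable => n; apply: sub_sigma_algebra; by exists n, X.
apply/seteqP; split.
  by move=> w h n _; exact: h.
by move=> w h n; exact: h.
Qed.

End Aux.
Section Mix.
Context d (T : measurableType d) (R : realType).
Variables (p : R) (P1 P2 : probability T R).

Definition clamp01 (q : R) : R := Num.min (Num.max q 0%R) 1%R.
Lemma clamp_ge0 : (0 <= clamp01 p)%R.
Proof. by rewrite /clamp01 le_min ler01 le_max lexx orbT. Qed.
Lemma clamp_le1 : (clamp01 p <= 1)%R.
Proof. by rewrite /clamp01 ge_min lexx orbT. Qed.
Lemma clampE : (0 <= p <= 1)%R -> clamp01 p = p.
Proof.
case/andP => p0 p1; rewrite /clamp01.
rewrite (_ : Num.max p 0 = p); last by rewrite /Num.max; case: ifP => // /ltW h; apply/eqP; rewrite eq_le h p0.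
by rewrite /Num.min; case: ifP => // /negbT; rewrite -leNgt => h; apply/eqP; rewrite eq_le h p1.
Qed.

Local Open Scope ereal_scope.
Definition mixm (A : set T) : \bar R :=
  (clamp01 p)%:E * P1 A + (1 - clamp01 p)%:E * P2 A.

Let k1 : {nonneg R} := NngNum clamp_ge0.
Lemma clamp_sub_ge0 : (0 <= 1 - clamp01 p)%R.
Proof. by rewrite subr_ge0 clamp_le1. Qed.
Let k2 : {nonneg R} := NngNum clamp_sub_ge0.

Lemma mixmE : mixm = measure_add (mscale k1 P1) (mscale k2 P2).
Proof. by apply/funext => A; rewrite measure_addE. Qed.

Let mix0 : mixm set0 = 0.
Proof. by rewrite /mixm !measure0 !mule0 adde0. Qed.
Let mix_ge0 A : 0 <= mixm A.
Proof. by rewrite /mixm adde_ge0 // mule_ge0 // lee_fin ?clamp_ge0 ?clamp_sub_ge0. Qed.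
Let mix_sa : semi_sigma_additive mixm.
Proof. rewrite mixmE; exact: measure_semi_sigma_additive. Qed.
HB.instance Definition _ := isMeasure.Build _ _ _ mixm mix0 mix_ge0 mix_sa.
Let mix_setT : mixm setT = 1.
Proof. by rewrite /mixm !probability_setT !mule1 -EFinD addrC subrK. Qed.
HB.instance Definition _ := Measure_isProbability.Build _ _ _ mixm mix_setT.

Lemma ge0_integral_mix (D : set T) (f : T -> \bar R) : measurable D -> measurable_fun D f ->
  (forall x, D x -> 0 <= f x) ->
  \int[mixm]_(x in D) f x = (clamp01 p)%:E * \int[P1]_(x in D) f x
     + (1 - clamp01 p)%:E * \int[P2]_(x in D) f x.
Proof.
move=> mD mf f0; rewrite mixmE ge0_integral_measure_add //.
by rewrite !ge0_integral_mscale.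
Qed.
End Mix.
Definition sconsM (R : realType) (x : R) : {mfun Seq R >-> Seq R} :=
  HB.pack (scons x : Seq R -> Seq R)
    (isMeasurableFun.Build _ _ (Seq R) (Seq R) (scons x) (meas_scons x)).
Section Stop.
Variables (R : realType) (X : set R).
Local Notation FT := (@Ft R).

Lemma Xinf_shift w : Xinf X w -> Xinf X (shift w).
Proof. by move=> h n; exact: h. Qed.

Lemma Xinf_scons x : X x -> scons x @^-1` Xinf X = Xinf X.
Proof.
move=> Xx; apply/seteqP; split => w h.
  by move=> n; exact: (h n.+1).
by case.
Qed.

Lemma meas_stop_fun (tau : (nat -> R) -> nat) (F : nat -> (nat -> R) -> R) :
  measurable X -> is_stopping_time X tau -> (forall t, Ft_measurable X t (F t)) ->
  measurable_fun (Xinf X : set (Seq R)) (fun w => (F (tau w) w)%:E).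
Proof.
move=> mX htau hF.
suff h : measurable_fun (Xinf X : set (Seq R)) (fun w : Seq R => F (tau w) w).
  exact/measurable_EFinP.
move=> _ B mB.
have [A hA] := choice htau.
have hF' : forall t, exists C, FT t C /\ F t @^-1` B `&` Xinf X = C `&` Xinf X.
  by move=> t; exact: hF.
have [C hC] := choice hF'.
rewrite (_ : _ `&` _ = \bigcup_t (A t `&` C t `&` Xinf X)).
  apply: bigcupT_measurable => t; apply: measurableI; last exact: meas_Xinf.
  apply: measurableI; apply: Ft_meas; [exact: (hA t).1|exact: (hC t).1].
apply/seteqP; split => w.
  move=> [Xw /= Bw]; exists (tau w) => //.
  have h1 : (tau @^-1` [set tau w] `&` Xinf X) w by [].
  have h2 : (F (tau w) @^-1` B `&` Xinf X) w by [].
  rewrite (hA (tau w)).2 in h1; rewrite (hC (tau w)).2 in h2.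
  by case: h1 => ? ?; case: h2.
move=> [t _ [[At Ct] Xw]]; split => //=.
have h1 : (A t `&` Xinf X) w by [].
have h2 : (C t `&` Xinf X) w by [].
rewrite -(hA t).2 in h1; rewrite -(hC t).2 in h2.
case: h1 => /= -> _; by case: h2.
Qed.

Definition tau2 (a : R) (ta tb : (nat -> R) -> nat) (w : nat -> R) : nat :=
  if w 0%N == a then (ta (shift w)).+1 else (tb (shift w)).+1.

Lemma Ft_eq0 t a : (0 < t)%N -> FT t [set w : nat -> R | w 0%N = a].
Proof.
move=> t0; rewrite (_ : [set w | _] = (fun w : nat -> R => w 0%N) @^-1` [set a]) //.
by apply: Ft_gen => //; exact: measurable_set1.
Qed.

Lemma stop_tau2 a ta tb : is_stopping_time X ta -> is_stopping_time X tb ->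
  is_stopping_time X (tau2 a ta tb).
Proof.
move=> ha hb [|s].
  exists set0; split; first exact: Ft0.
  by apply/seteqP; split => w [] //; rewrite /tau2 /=; case: ifP.
have [Aa [hAa eAa]] := ha s; have [Ab [hAb eAb]] := hb s.
exists (([set w | w 0%N = a] `&` @shift R @^-1` Aa) `|`
        (~` [set w | w 0%N = a] `&` @shift R @^-1` Ab)); split.
  apply: FtU2; apply: FtI2; try exact: Ft_shift.
    exact: Ft_eq0.
  by apply: FtC; exact: Ft_eq0.
apply/seteqP; split => w [/= hw Xw]; split => //.
- move: hw; rewrite /tau2; case: ifPn => [/eqP w0|/eqP w0] [] hs.
    left; split => //=.
    have : (ta @^-1` [set s] `&` Xinf X) (shift w) by split => //; exact: Xinf_shift.
    by rewrite eAa => -[].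
  right; split => //=.
  have : (tb @^-1` [set s] `&` Xinf X) (shift w) by split => //; exact: Xinf_shift.
  by rewrite eAb => -[].
- rewrite /tau2; case: hw => -[/= w0 hs].
    have : (Aa `&` Xinf X) (shift w) by split => //; exact: Xinf_shift.
    by rewrite -eAa w0 eqxx => -[/= ->].
  have : (Ab `&` Xinf X) (shift w) by split => //; exact: Xinf_shift.
  have -> : (w 0%N == a) = false by apply/negbTE/eqP.
  by rewrite -eAb => -[/= ->].
Qed.

End Stop.
Section MixSeq.
Variables (R : realType) (X : set R) (mu : R).
Local Notation FT := (@Ft R).
Variables (a b p : R) (Qa Qb : probability (Seq R) R).
Hypotheses (p01 : 0 <= p <= 1).

Definition Qmix := mixm p (distribution Qa (sconsM a)) (distribution Qb (sconsM b)).

Lemma QmixE A : Qmix A = (p%:E * Qa (scons a @^-1` A) + (1-p)%:E * Qb (scons b @^-1` A))%E.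
Proof. by rewrite /Qmix /mixm clampE. Qed.

Lemma int_Qmix (D : set (Seq R)) (f : Seq R -> \bar R) : measurable D -> measurable_fun D f ->
  (forall w, D w -> 0 <= f w)%E ->
  (\int[Qmix]_(w in D) f w = p%:E * \int[Qa]_(w in scons a @^-1` D) f (scons a w)
    + (1-p)%:E * \int[Qb]_(w in scons b @^-1` D) f (scons b w))%E.
Proof.
move=> mD mf f0; rewrite /Qmix ge0_integral_mix // clampE //.
rewrite /distribution.
rewrite (ge0_integral_pushforward (meas_scons a)) //; last by move=> y /[!inE]; exact: f0.
rewrite (ge0_integral_pushforward (meas_scons b)) //; by move=> y /[!inE]; exact: f0.
Qed.

End MixSeq.
Section Kern.
Variables (R : realType).
Local Notation FT := (@Ft R).

Lemma prob_fin (P : probability R R) B : measurable B -> P B = (fine (P B))%:E.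
Proof. by move=> mB; rewrite fineK // fin_num_measure. Qed.

Lemma kern_meas n (k : (nat -> R) -> probability R R) :
  (forall B, measurable B -> forall C, measurable C -> FT n ((fun w => fine (k w B)) @^-1` C)) ->
  forall B, measurable B -> forall D : set (Seq R), measurable_fun D (fun w => k w B).
Proof.
move=> hk B mB D.
rewrite (_ : (fun w => k w B) = EFin \o (fun w => fine (k w B))); last first.
  by apply/funext => w /=; rewrite -prob_fin.
suff h : measurable_fun D (fun w : Seq R => fine (k w B)) by exact/measurable_EFinP.
move=> mD C mC; apply: measurableI => //.
by apply: Ft_meas; exact: hk.
Qed.

Lemma Ft0_triv A : FT 0 A -> A = set0 \/ A = setT.
Proof.
apply: (@smallest_sub _ (sigma_algebra setT) _ [set A | A = set0 \/ A = setT]).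
- split.
  + by left.
  + move=> B [->|->]; [right; exact: setD0|left; exact: setDv].
  + move=> F hF; have [[n Fn]|nF] := pselect (exists n, F n = setT).
      right; apply/seteqP; split => // w _; exists n => //; by rewrite Fn.
    left; apply/seteqP; split => // w [n _ Fnw].
    case: (hF n) => Fn; first by rewrite Fn in Fnw.
    by exfalso; apply: nF; exists n.
- by move=> A0 [i [B [+ _]]]; rewrite ltn0.
Qed.

End Kern.
Section Cond.
Variables (R : realType) (X : set R) (mu : R).
Local Notation FT := (@Ft R).
Variables (a b p : R) (Qa Qb : probability (Seq R) R).
Hypotheses (p01 : 0 <= p <= 1) (Xa : X a) (Xb : X b) (ab : a != b)
  (X01 : X `<=` `[0, 1]) (pm : p * a + (1 - p) * b = mu)
  (hQa : barH X mu Qa) (hQb : barH X mu Qb).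

Lemma ba_false : (b == a) = false.
Proof. by rewrite eq_sym (negbTE ab). Qed.

Variable Q : probability (Seq R) R.
Hypothesis QE : forall A, Q A =
  (p%:E * Qa (scons a @^-1` A) + (1-p)%:E * Qb (scons b @^-1` A))%E.
Hypothesis QI : forall (D : set (Seq R)) (f : Seq R -> \bar R), measurable D -> measurable_fun D f ->
  (forall w, D w -> 0 <= f w)%E ->
  (\int[Q]_(w in D) f w = p%:E * \int[Qa]_(w in scons a @^-1` D) f (scons a w)
    + (1-p)%:E * \int[Qb]_(w in scons b @^-1` D) f (scons b w))%E.

Lemma Qmix_Xinf : Q (Xinf X) = 1%E.
Proof.
rewrite QE // !Xinf_scons // hQa.1 hQb.1 !mule1 -EFinD.
by rewrite addrC subrK.
Qed.

Lemma Qmix_setT : Q (setT : set (nat -> R)) = 1%E.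
Proof.
by rewrite QE // !preimage_setT !probability_setT !mule1 -EFinD addrC subrK.
Qed.

Lemma dirac_pre (P : probability (Seq R) R) x B :
  P (scons x @^-1` ((fun w : nat -> R => w 0%N) @^-1` B)) = \d_x B.
Proof.
rewrite diracE; have [Bx|Bx] := pselect (B x).
  rewrite mem_set //; rewrite (_ : _ @^-1` _ = setT) ?probability_setT //.
  by apply/seteqP; split.
rewrite memNset //; rewrite (_ : _ @^-1` _ = set0) ?measure0 //.
by apply/seteqP; split.
Qed.

Definition nu2 (q x y : R) : probability R R := mixm q (\d_x) (\d_y).

Lemma nu2E (A : set R) : nu2 p a b A = (p * (a \in A)%:R + (1 - p) * (b \in A)%:R)%:E.
Proof. by rewrite /nu2 /= /mixm /dirac /indic clampE. Qed.

Lemma Qmix_cond0 : cond_two_point mu Q 0.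
Proof.
pose nu := nu2 p a b.
exists (fun _ => nu); split; [|split].
- move=> B mB C mC; have [h|h] := pselect (C (fine (nu B))).
    by rewrite (_ : _ @^-1` _ = setT); [exact: FtT|apply/seteqP; split].
  by rewrite (_ : _ @^-1` _ = set0); [exact: Ft0|apply/seteqP; split].
- move=> A B /Ft0_triv [->|->] mB.
    by rewrite set0I measure0 integral_set0.
  rewrite setTI integral_cst //.
  apply: (eq_trans _ (esym (congr1 (fun y => (_ * y)%E) Qmix_setT))).
  by rewrite mule1 QE // !dirac_pre !diracE clampE // /indic -!EFinM -EFinD.
- apply: aeW => w; split.
    exists a, b; rewrite /nu nu2E !mem_set /=; [|by right|by left].
    by rewrite !mulr1 addrC subrK.
  rewrite integralE.
  have mf : measurable_fun [set: R] (EFin : R -> \bar R) by exact: EFin_measurable.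
  rewrite /nu /nu2 !ge0_integral_mix //; last first.
  all: try (by move=> x _; exact: funeneg_ge0).
  all: try (by move=> x _; exact: funepos_ge0).
  all: try (exact: measurable_funeneg).
  all: try (exact: measurable_funepos).
  rewrite !integral_dirac //.
  all: try (exact: measurable_funeneg).
  all: try (exact: measurable_funepos).
  have a0 : 0 <= a by have := X01 Xa; rewrite /= in_itv => /andP[].
  have b0 : 0 <= b by have := X01 Xb; rewrite /= in_itv => /andP[].
  have ha : maxe a%:E 0 = a%:E by rewrite max_l // lee_fin.
  have hb : maxe b%:E 0 = b%:E by rewrite max_l // lee_fin.
  have hna : maxe (- a%:E)%E 0 = 0 by rewrite max_r // lee_fin oppr_le0.
  have hnb : maxe (- b%:E)%E 0 = 0 by rewrite max_r // lee_fin oppr_le0.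
  rewrite clampE // /dirac /indic !in_setT !mul1e !funeposE !funenegE ha hb hna hnb.
  by rewrite !mule0 adde0 sube0 -!EFinM -EFinD pm.
Qed.

Lemma Qmix_condS n : cond_two_point mu Q n.+1.
Proof.
have [ka [hka1 [hka2 hka3]]] := hQa.2 n.
have [kb [hkb1 [hkb2 hkb3]]] := hQb.2 n.
pose k' := fun w : nat -> R => if w 0%N == a then ka (@shift R w) else kb (@shift R w).
have hk1 : forall B, measurable B -> forall C, measurable C ->
    FT n.+1 ((fun w => fine (k' w B)) @^-1` C).
  move=> B mB C mC.
  rewrite (_ : _ @^-1` _ = ([set w | w 0%N = a] `&` @shift R @^-1` ((fun w => fine (ka w B)) @^-1` C))
     `|` (~` [set w | w 0%N = a] `&` @shift R @^-1` ((fun w => fine (kb w B)) @^-1` C))).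
    apply: FtU2; apply: FtI2.
    - exact: Ft_eq0.
    - by apply: Ft_shift; exact: hka1.
    - by apply: FtC; exact: Ft_eq0.
    - by apply: Ft_shift; exact: hkb1.
  apply/seteqP; split => w /=; rewrite /k'.
    by case: eqP => w0 h; [left|right].
  by move=> [[/= w0 h]|[/= w0 h]]; case: eqP.
exists k'; split; [exact: hk1|split].
- move=> A B hA mB.
  have mA := Ft_meas hA.
  have mk : measurable_fun (A : set (Seq R)) (fun w : Seq R => k' w B) by exact: (kern_meas hk1 mB).
  rewrite QE // QI //.
  rewrite !preimage_setI.
  have ea : scons a @^-1` ((fun w : nat -> R => w n.+1) @^-1` B) = (fun w : nat -> R => w n) @^-1` B by [].
  have eb : scons b @^-1` ((fun w : nat -> R => w n.+1) @^-1` B) = (fun w : nat -> R => w n) @^-1` B by [].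
  rewrite ea eb hka2 ?hkb2 //; try exact: Ft_scons.
  congr (_ * _ + _ * _)%E; apply: eq_integral => w _.
    by rewrite /k' /= eqxx.
  by rewrite /k' /= ba_false.
- case: hka3 => Na [mNa Na0 sNa].
  case: hkb3 => Nb [mNb Nb0 sNb].
  exists (([set w | w 0%N = a] `&` @shift R @^-1` Na) `|` (~` [set w | w 0%N = a] `&` @shift R @^-1` Nb)); split.
  + have m0 : measurable ([set w | w 0%N = a] : set (Seq R)).
      by apply: (@Ft_meas _ 1); exact: Ft_eq0.
    have mSa : measurable (@shift R @^-1` Na : set (Seq R)).
      by have := meas_shift measurableT mNa; rewrite setTI.
    have mSb : measurable (@shift R @^-1` Nb : set (Seq R)).
      by have := meas_shift measurableT mNb; rewrite setTI.
    apply: measurableU; apply: measurableI => //; exact: measurableC.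
  + rewrite QE.
    rewrite (_ : scons a @^-1` _ = Na); last first.
      apply/seteqP; split => w /=; first by case => -[].
      by move=> h; left.
    rewrite (_ : scons b @^-1` _ = Nb); last first.
      apply/seteqP; split => w /=.
        case => -[/= e h] //; by move: ba_false; rewrite e eqxx.
      by move=> h; right; split => //; apply/eqP; rewrite eq_sym.
    by rewrite Na0 Nb0 !mule0 adde0.
  + move=> w /= hw; case: (eqVneq (w 0%N) a) => w0; [left|right]; split => //=.
      by apply: sNa => /=; move: hw; rewrite /k' w0 eqxx.
    by apply/eqP.
    by apply: sNb => /=; move: hw; rewrite /k' (negbTE w0).
Qed.

Lemma barH_Qmix : barH X mu Q.
Proof. split; first exact: Qmix_Xinf. by case=> [|n]; [exact: Qmix_cond0|exact: Qmix_condS]. Qed.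

End Cond.
Section Final.
Variables (R : realType) (X : set R) (mu : R) (E : nat -> (nat -> R) -> R).
Hypotheses (mX : measurable X) (X01 : X `<=` `[0, 1]) (X0 : X 0) (X1 : X 1)
  (hmu : 0 < mu < 1) (hE : eprocess X mu E).

Definition V (x : R) (v : \bar R) := exists tau (Q : probability (Seq R) R),
  [/\ is_stopping_time X tau, barH X mu Q &
      v = (\int[Q]_(w in Xinf X) (E (tau w).+1 (scons x w))%:E)%E].

Lemma Xinf_sconsP x w : X x -> Xinf X w -> Xinf X (scons x w).
Proof. by move=> Xx Xw n; case: n. Qed.

Lemma V_ge0 x v : X x -> V x v -> (0 <= v)%E.
Proof.
move=> Xx [tau [Q [_ _ ->]]]; apply: integral_ge0 => w Xw.
by rewrite lee_fin; apply: hE.2.1; exact: Xinf_sconsP.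
Qed.

Lemma stop0 : is_stopping_time X (fun _ => 0%N).
Proof.
case=> [|t].
  by exists setT; split; [exact: FtT|apply/seteqP; split => w []].
exists set0; split; first exact: Ft0.
by apply/seteqP; split => w [].
Qed.

Lemma V_any x y v : V x v -> exists v', V y v'.
Proof.
move=> [tau [Q [_ hQ _]]].
by exists (\int[Q]_(w in Xinf X) (E 1%N (scons y w))%:E)%E, (fun _ => 0%N), Q; split => //; exact: stop0.
Qed.

Lemma mixV a b p va vb : X a -> X b -> a != b -> 0 <= p <= 1 ->
  p * a + (1 - p) * b = mu -> V a va -> V b vb ->
  (p%:E * va + (1 - p)%:E * vb <= 1)%E.
Proof.
move=> Xa Xb ab p01 pm [ta [Qa [hta hQa ->]]] [tb [Qb [htb hQb ->]]].
pose Q : probability (Seq R) R := Qmix a b p Qa Qb.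
have QE : forall A, Q A = (p%:E * Qa (scons a @^-1` A) + (1-p)%:E * Qb (scons b @^-1` A))%E.
  by move=> A; exact: QmixE.
have QI : forall (D : set (Seq R)) (f : Seq R -> \bar R), measurable D -> measurable_fun D f ->
    (forall w, D w -> 0 <= f w)%E ->
    (\int[Q]_(w in D) f w = p%:E * \int[Qa]_(w in scons a @^-1` D) f (scons a w)
      + (1-p)%:E * \int[Qb]_(w in scons b @^-1` D) f (scons b w))%E.
  by move=> D f mD mf f0; exact: int_Qmix.
have hQ : barH X mu Q.
  by apply: (barH_Qmix (a:=a) (b:=b) (p:=p) (Qa:=Qa) (Qb:=Qb)).
have htau := stop_tau2 a hta htb.
have := hE.2.2 Q (tau2 a ta tb) hQ htau.
rewrite QI; first last.
- by move=> w Xw; rewrite lee_fin; exact: hE.2.1.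
- exact: meas_stop_fun hE.1.
- exact: meas_Xinf.
rewrite !Xinf_scons //.
have e1 : (\int[Qa]_(w in Xinf X) (E (tau2 a ta tb (scons a w)) (scons a w))%:E =
           \int[Qa]_(w in Xinf X) (E (ta w).+1 (scons a w))%:E)%E.
  by apply: eq_integral => w _; rewrite /tau2 /= eqxx.
have e2 : (\int[Qb]_(w in Xinf X) (E (tau2 a ta tb (scons b w)) (scons b w))%:E =
           \int[Qb]_(w in Xinf X) (E (tb w).+1 (scons b w))%:E)%E.
  by apply: eq_integral => w _; rewrite /tau2 /= (ba_false ab).
by rewrite e1 e2.
Qed.

Lemma div_le (p q s t : R) : 0 < q -> 0 < t -> p * t <= s * q -> p / q <= s / t.
Proof. by move=> q0 t0 h; rewrite ler_pdivrMr // mulrAC ler_pdivlMr. Qed.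

Lemma mixR a b p ra rb : X a -> X b -> a != b -> 0 <= p <= 1 ->
  p * a + (1 - p) * b = mu -> V a ra%:E -> V b rb%:E -> p * ra + (1 - p) * rb <= 1.
Proof.
move=> Xa Xb ab p01 pm ha hb; have := mixV Xa Xb ab p01 pm ha hb.
by rewrite -!EFinM -EFinD lee_fin.
Qed.

Lemma V_fin x v : X x -> V x v -> exists r : R, v = r%:E.
Proof.
move=> Xx hv; have v0 := V_ge0 Xx hv.
have [m0 m1] : 0 < mu /\ mu < 1 by case/andP: hmu.
have key : exists q : R, 0 < q /\ (q%:E * v <= 1)%E.
  have [xm|mx] := lerP x mu.
  - have x1 : x < 1 by apply: le_lt_trans m1.
    have [v1 hv1] := V_any 1 hv.
    pose p := (1 - mu) / (1 - x).
    have p0 : 0 < p by rewrite divr_gt0 // subr_gt0.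
    have p1 : p <= 1 by rewrite ler_pdivrMr ?subr_gt0 // mul1r lerD2l lerN2.
    have pm : p * x + (1 - p) * 1 = mu by rewrite /p; field; rewrite subr_eq0 eq_sym lt_eqF.
    have := mixV Xx X1 (negbT (lt_eqF x1)) _ pm hv hv1.
    rewrite ltW //= p1 => /(_ isT) h; exists p; split => //.
    apply: le_trans h; apply: leeDl; apply: mule_ge0; first by rewrite lee_fin subr_ge0.
    exact: V_ge0 X1 hv1.
  - have x0 : 0 < x by apply: lt_trans mx.
    have [v1 hv1] := V_any 0 hv.
    pose p := 1 - mu / x.
    have p0 : 0 <= p by rewrite subr_ge0 ler_pdivrMr // mul1r ltW.
    have p1 : p <= 1 by rewrite lerBlDr lerDl divr_ge0 // ltW.
    have pm : p * 0 + (1 - p) * x = mu by rewrite /p; field; rewrite gt_eqF.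
    have := mixV X0 Xx (negbT (lt_eqF x0)) _ pm hv1 hv.
    rewrite p0 p1 => /(_ isT) h; exists (1 - p); split.
      by rewrite /p opprB addrCA subrr addr0 divr_gt0.
    apply: le_trans h; apply: leeDr; apply: mule_ge0; first by rewrite lee_fin.
    exact: V_ge0 X0 hv1.
case: v v0 key hv => [r| |] // _ [q [q0 h]] _; first by exists r.
by move: h; rewrite gt0_muley ?lte_fin.
Qed.

Lemma V_ger x r : X x -> V x r%:E -> 0 <= r.
Proof. by move=> Xx /(V_ge0 Xx); rewrite lee_fin. Qed.

End Final.
Unset Implicit Arguments.

Theorem lemma5 (R : realType) (X : set R) (mu : R)
  (E : nat -> (nat -> R) -> R) :
  measurable X -> X `<=` `[0, 1] -> X 0 -> X 1 -> 0 < mu < 1 ->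
  eprocess X mu E ->
  exists2 lam1 : R, (mu - 1)^-1 <= lam1 <= mu^-1 &
    forall (tau : (nat -> R) -> nat) (Q : probability (Seq R) R) (x : R),
      is_stopping_time X tau -> barH X mu Q -> X x ->
      (\int[Q]_(w in Xinf X) (E (tau w).+1 (scons x w))%:E
         <= (1 + lam1 * (x - mu))%:E)%E.
Proof.
move=> mX X01 X0 X1 hmu hE.
have [m0 m1] : 0 < mu /\ mu < 1 by apply/andP.
have fin := V_fin mX X01 X0 X1 hmu hE.
have ger := V_ger hE.
have mixr := mixR mX X01 hE.
have anyr : forall x y r, X y -> V X mu E x r%:E -> exists ry, V X mu E y ry%:E.
  move=> x y r Xy h; have [v hv] := V_any y h.
  by have [ry e] := fin _ _ Xy hv; exists ry; rewrite -e.
pose S := [set y : R | exists b r, [/\ X b, mu < b, V X mu E b r%:E & y = (r - 1) / (b - mu)]]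
   `|` [set (mu - 1)^-1].
have ubS : ubound S mu^-1.
  move=> y [[b [r [Xb mb hb ->]]] | ->]; last first.
    apply: (@le_trans _ _ 0); first by rewrite invr_le0 subr_le0 ltW.
    by rewrite invr_ge0 ltW.
  have [r0 h0] := anyr _ _ _ X0 hb.
  have b0 : 0 < b by apply: lt_trans mb.
  pose p := 1 - mu / b.
  have p0 : 0 <= p by rewrite subr_ge0 ler_pdivrMr // mul1r ltW.
  have p1 : p <= 1 by rewrite lerBlDr lerDl divr_ge0 // ltW.
  have pm : p * 0 + (1 - p) * b = mu by rewrite /p; field; rewrite gt_eqF.
  have h := mixr _ _ _ _ _ X0 Xb (negbT (lt_eqF b0)) (introT andP (conj p0 p1)) pm h0 hb.
  have r00 := ger _ _ X0 h0.
  have eb : b * (p * r0 + (1 - p) * r) = (b - mu) * r0 + mu * r.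
    by rewrite /p; field; rewrite gt_eqF.
  have h2 : (b - mu) * r0 + mu * r <= b.
    by rewrite -eb -[X in _ <= X]mulr1; apply: ler_wpM2l => //; exact: ltW.
  rewrite -[mu^-1]div1r; apply: div_le => //; first by rewrite subr_gt0.
  have : 0 <= (b - mu) * r0 by apply: mulr_ge0 => //; rewrite subr_ge0 ltW.
  lra.
have S0 : S (mu - 1)^-1 by right.
have hsup : has_sup S by split; [exists (mu - 1)^-1 | exists mu^-1].
exists (sup S).
  apply/andP; split; first exact: (sup_upper_bound hsup).
  by apply: ge_sup; [exists (mu - 1)^-1|].
move=> tau Q x htau hQ Xx.
have hv : V X mu E x (\int[Q]_(w in Xinf X) (E (tau w).+1 (scons x w))%:E)%E.
  by exists tau, Q.
have [r er] := fin _ _ Xx hv; rewrite er in hv *; rewrite lee_fin.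
have x01 := X01 x Xx; rewrite /= in_itv /= in x01; case/andP: x01 => x0 x1.
have [xm|mx|xm] := ltgtP x mu.
- have lam_le : sup S <= (1 - r) / (mu - x).
    apply: ge_sup; first by exists (mu - 1)^-1.
    move=> y [[b [rb [Xb mb hb ->]]] | ->].
    + have bx : x < b by apply: lt_trans mb.
      pose p := (b - mu) / (b - x).
      have p0 : 0 <= p by rewrite divr_ge0 // subr_ge0 ltW.
      have p1 : p <= 1 by rewrite ler_pdivrMr ?subr_gt0 // mul1r lerD2l lerN2 ltW.
      have pm : p * x + (1 - p) * b = mu by rewrite /p; field; rewrite subr_eq0 gt_eqF.
      have h := mixr _ _ _ _ _ Xx Xb (negbT (lt_eqF bx)) (introT andP (conj p0 p1)) pm hv hb.
      have eb : (b - x) * (p * r + (1 - p) * rb) = (b - mu) * r + (mu - x) * rb.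
        by rewrite /p; field; rewrite subr_eq0 gt_eqF.
      have h2 : (b - mu) * r + (mu - x) * rb <= b - x.
        rewrite -eb -[X in _ <= X]mulr1; apply: ler_wpM2l => //.
        by rewrite subr_ge0 ltW.
      apply: div_le; [by rewrite subr_gt0|by rewrite subr_gt0|].
      nra.
    + have [r1 h1] := anyr _ _ _ X1 hv.
      have x1' : x < 1 by apply: lt_trans m1.
      pose p := (1 - mu) / (1 - x).
      have p0 : 0 <= p by rewrite divr_ge0 // subr_ge0 ltW.
      have p1 : p <= 1 by rewrite ler_pdivrMr ?subr_gt0 // mul1r lerD2l lerN2 ltW.
      have pm : p * x + (1 - p) * 1 = mu by rewrite /p; field; rewrite subr_eq0 eq_sym lt_eqF.
      have h := mixr _ _ _ _ _ Xx X1 (negbT (lt_eqF x1')) (introT andP (conj p0 p1)) pm hv h1.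
      have r10 := ger _ _ X1 h1.
      have eb : (1 - x) * (p * r + (1 - p) * r1) = (1 - mu) * r + (mu - x) * r1.
        by rewrite /p; field; rewrite subr_eq0 eq_sym lt_eqF.
      have h2 : (1 - mu) * r + (mu - x) * r1 <= 1 - x.
        rewrite -eb -[X in _ <= X]mulr1; apply: ler_wpM2l => //.
        by rewrite subr_ge0 ltW.
      have -> : (mu - 1)^-1 = -1 / (1 - mu).
        have mu1 : mu - 1 != 0 by rewrite subr_eq0 lt_eqF.
        have mu1' : 1 - mu != 0 by rewrite subr_eq0 eq_sym lt_eqF.
        by field; rewrite ?mu1 ?mu1'.
      apply: div_le; [by rewrite subr_gt0|by rewrite subr_gt0|].
      have : 0 <= (mu - x) * r1 by apply: mulr_ge0 => //; rewrite subr_ge0 ltW.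
      nra.
  move: lam_le; rewrite ler_pdivlMr ?subr_gt0 // => h.
  nra.
- have : (r - 1) / (x - mu) <= sup S.
    by apply: (sup_upper_bound hsup); left; exists x, r.
  rewrite ler_pdivrMr ?subr_gt0 // => h.
  nra.
- subst x.
  have [r1 h1] := anyr _ _ _ X1 hv.
  have pm : 1 * mu + (1 - 1) * 1 = mu by rewrite subrr mul0r addr0 mul1r.
  have h := mixr _ _ _ _ _ Xx X1 (negbT (lt_eqF m1)) (introT andP (conj ler01 (lexx 1))) pm hv h1.
  move: h; rewrite subrr mul0r addr0 mul1r => h.
  by rewrite subrr mulr0 addr0.
Qed.
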